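(* (i) If $p$ is negligible to double factorial, then so is $q(x)=\int_0^xp(y)dy$. (ii) The set of power series negligible to double factorial is closed under addition, differentiation, scalar multiplication and multiplication; hence if $p$ is negligible to double factorial, then every $q\in\mathcal A_D(p)$ is negligible to double factorial. (iii) If $p(x)=\sum p_kx^k$ is negligible to double factorial and $c$ is a constant, then $q(x)=\sum p_kc^kx^k$ is negligible to double factorial. (iv) If $p$ is negligible to double factorial, then so is $|p|$.
   Context: Power series have real coefficients. $p=\sum p_kx^k$ is negligible to double factorial if $\limsup_{k\to\infty}(|p_k|(k-1)!!)^{1/k}=0$, with $(-1)!!=0!!=1$. $|p|(x):=\sum_k|p_k|x^k$. $\mathcal A_D(p)$ is the $\mathbb{R}$-algebra generated by $\{p,p',p'',\dots\}$, i.e. all finite sums $\sum_sc_sf_{s,1}\cdots f_{s,m_s}$ with $c_s\in\mathbb{R}$, $m_s\in\mathbb N$ (empty product $=1$), each $f_{s,i}$ a derivative of $p$ of some order. *)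

(* Defs.v *)
From HB Require Import structures.
From mathcomp Require Import all_boot all_order all_algebra.
From mathcomp Require Import all_classical all_reals all_analysis.
Set Implicit Arguments. Unset Strict Implicit. Unset Printing Implicit Defensive.
Import Order.TTheory GRing.Theory Num.Theory.
Local Open Scope ring_scope.

(* A (formal) power series with real coefficients is its coefficient
   sequence p : nat -> R, p k being the coefficient of x^k. *)

Fixpoint dfact (n : nat) : nat :=
  match n with
  | 0 => 1
  | 1 => 1
  | (m.+2) as n' => (n' * dfact m)%N
  end.

(* (k-1)!! with the convention (-1)!! = 1 (k.-1 = 0 for k = 0, and 0!! = 1) *)
Definition dfact_pred (k : nat) : nat := dfact k.-1.

Definition negl_dfact {R : realType} (p : nat -> R) : Prop :=
  limn_esup (fun k : nat =>
    ((`|p k| * (dfact_pred k)%:R) `^ (k%:R)^-1)%:E) = 0%E.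

Definition ps_add {R : realType} (p q : nat -> R) : nat -> R := fun k => p k + q k.
Definition ps_scale {R : realType} (c : R) (p : nat -> R) : nat -> R := fun k => c * p k.
Definition ps_mul {R : realType} (p q : nat -> R) : nat -> R :=
  fun k => \sum_(i < k.+1) p i * q (k - i)%N.
Definition ps_deriv {R : realType} (p : nat -> R) : nat -> R :=
  fun k => k.+1%:R * p k.+1.
Definition ps_derivn {R : realType} (n : nat) (p : nat -> R) : nat -> R :=
  iter n ps_deriv p.
Definition ps_integ {R : realType} (p : nat -> R) : nat -> R :=
  fun k => match k with 0 => 0 | k'.+1 => p k' / k%:R end.
Definition ps_one {R : realType} : nat -> R := fun k => if k == 0%N then 1 else 0.
Definition ps_dilate {R : realType} (c : R) (p : nat -> R) : nat -> R :=
  fun k => p k * c ^+ k.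
Definition ps_abs {R : realType} (p : nat -> R) : nat -> R := fun k => `|p k|.

Inductive AD {R : realType} (p : nat -> R) : (nat -> R) -> Prop :=
  | AD_der n : AD p (ps_derivn n p)
  | AD_one : AD p ps_one
  | AD_add f g : AD p f -> AD p g -> AD p (ps_add f g)
  | AD_scale c f : AD p f -> AD p (ps_scale c f)
  | AD_mul f g : AD p f -> AD p g -> AD p (ps_mul f g).

(* Main.v *)
Require Import Defs.
From HB Require Import structures.
From mathcomp Require Import all_boot all_order all_algebra.
From mathcomp Require Import zify ring.
From mathcomp Require Import all_classical all_reals all_analysis.
From mathcomp Require Import zify ring.
Lemma dfact_gt0 n : (0 < dfact n)%N.
Proof.
have H : forall n, (0 < dfact n)%N /\ (0 < dfact n.+1)%N.
  elim=> [|m [h1 h2]]; first by [].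
  by split=> //=; rewrite muln_gt0 h1.
by case: (H n).
Qed.

Lemma dfact_mono n : (dfact n <= dfact n.+1)%N.
Proof.
have H : forall n, (dfact n <= dfact n.+1)%N /\ (dfact n.+1 <= dfact n.+2)%N.
  elim=> [|m [h1 h2]]; first by [].
  split=> //=. 
  change (dfact m.+2 <= m.+3 * dfact m.+1)%N.
  rewrite /=. by apply: leq_mul.
by case: (H n).
Qed.

Lemma dfactS n : (dfact n.+1 <= n.+1 * dfact n)%N.
Proof.
case: n => [|m]; first by [].
change (m.+2 * dfact m <= m.+2 * dfact m.+1)%N.
by rewrite leq_mul2l dfact_mono orbT.
Qed.

Lemma dfactS' k : (dfact k <= k.+1 * dfact k.-1)%N.
Proof.
case: k => [|m]; first by [].
by rewrite (leq_trans (dfactS m))// leq_mul2r leqnSn orbT.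
Qed.

Lemma dfact_pred_mono k : (dfact k.-1 <= dfact k)%N.
Proof. by case: k => [|k] //=; exact: dfact_mono. Qed.

Lemma dfactD n : forall a b, (a + b = n)%N -> (dfact (a + b) <= 2 ^ (a + b) * dfact a * dfact b)%N.
Proof.
elim/ltn_ind: n => n IH.
have main : forall a b, (a + b = n)%N -> (a <= b)%N ->
    (dfact (a + b) <= 2 ^ (a + b) * dfact a * dfact b)%N.
  move=> a b abn ab.
  case: b ab abn => [|[|b']] ab abn.
  - by case: a ab abn.
  - by case: a ab abn => [|[|]].
  have IHb := IH (a + b')%N _ a b' erefl.
  have e1 : (a + b'.+2 = (a + b').+2)%N by rewrite !addnS.
  rewrite e1.
  change (dfact (a + b').+2) with ((a + b').+2 * dfact (a + b'))%N.
  change (dfact b'.+2) with (b'.+2 * dfact b')%N.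
  have h : (a + b' < n)%N by lia.
  have := IHb h => {}IHb.
  rewrite expnS expnS.
  apply: (leq_trans (leq_mul (leqnn _) IHb)).
  set P := (2 ^ (a + b'))%N; set Q := dfact a; set S := dfact b'.
  have : ((a + b').+2 <= 2 * (2 * b'.+2))%N by lia.
  move=> hh.
  rewrite -!mulnA. rewrite mulnA.
  rewrite [X in (_ <= X)%N](_ : _ = (2 * (2 * b'.+2)) * (P * (Q * S)))%N; last first.
    by rewrite /P /Q /S; nia.
  by rewrite -mulnA; apply: leq_mul => //; apply: ltnW.
move=> a b abn; case: (leqP a b) => ab; first exact: main.
rewrite addnC mulnAC; apply: main; [by rewrite addnC | exact: ltnW].
Qed.

Lemma fD i j : (dfact_pred (i + j) <= 4 ^ (i + j) * dfact_pred i * dfact_pred j)%N.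
Proof.
rewrite /dfact_pred.
case: i => [|i]; first by rewrite add0n /= muln1 leq_pmull // expn_gt0.
case: j => [|j]; first by rewrite addn0 /= muln1 leq_pmull // expn_gt0.
have e1 : ((i.+1 + j.+1).-1 = (i + j).+1)%N by lia.
rewrite e1 /=.
apply: (leq_trans (dfactS _)).
have h := @dfactD (i + j)%N i j erefl.
have h2 : ((i + j).+1 <= 2 ^ (i.+1 + j.+1))%N.
  apply: ltnW; apply: (leq_trans (ltn_expl _ (isT : (1 < 2)%N))).
  by rewrite leq_exp2l //; lia.
have h3 : (2 ^ (i + j) <= 2 ^ (i.+1 + j.+1))%N by rewrite leq_exp2l //; lia.
rewrite (_ : 4 = 2 * 2)%N // expnMn -!mulnA.
apply: leq_mul => //.
rewrite mulnA; apply: (leq_trans h).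
by rewrite -!mulnA leq_mul2r h3 orbT.
Qed.
Import Order.TTheory GRing.Theory Num.Theory.
Local Open Scope classical_set_scope.
Local Open Scope ring_scope.

Section A.
Variable R : realType.
Implicit Types p q : nat -> R.

Definition X p k : R := `|p k| * (dfact_pred k)%:R.

Lemma X_ge0 p k : 0 <= X p k.
Proof. by rewrite /X mulr_ge0. Qed.

Definition EV p := forall e : R, 0 < e -> exists N, forall k, (N <= k)%N -> X p k <= e ^+ k.

Lemma powR_root (x : R) k : 0 <= x -> (0 < k)%N -> (x `^ (k%:R)^-1) ^+ k = x.
Proof.
move=> x0 k0; rewrite -powR_mulrn ?powR_ge0// -powRrM mulVf ?powRr1//.
by rewrite pnatr_eq0 -lt0n.
Qed.

Lemma root_pow (e : R) k : 0 <= e -> (0 < k)%N -> (e ^+ k) `^ (k%:R)^-1 = e.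
Proof.
move=> e0 k0; rewrite -powR_mulrn// -powRrM mulfV ?powRr1//.
by rewrite pnatr_eq0 -lt0n.
Qed.

Lemma neglP p : negl_dfact p <-> EV p.
Proof.
rewrite /negl_dfact; set a := fun k : nat => (`|p k| * (dfact_pred k)%:R) `^ (k%:R)^-1.
have aE k : a k = X p k `^ (k%:R)^-1 by [].
split.
- move=> H.
  have : (fun k => (a k)%:E) @ \oo --> 0%E.
    apply: limn_esup_le_cvg; first by rewrite H.
    by move=> n; rewrite lee_fin powR_ge0.
  move=> /fine_cvgP[_ /= /cvgr0Pnorm_le Ha] e e0.
  have [N _ HN] := Ha e e0.
  exists N.+1 => k Nk.
  have := HN k (ltnW Nk); rewrite /= ger0_norm ?powR_ge0// => hk.
  rewrite -(@powR_root (X p k) k) ?X_ge0 //; last by apply: leq_trans Nk.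
  by apply: lerXn2r => //; rewrite nnegrE ?powR_ge0 // ltW.
- move=> H.
  have : (fun k => (a k)%:E) @ \oo --> 0%E.
    apply/fine_cvgP; split; first exact: nearW.
    apply/cvgr0Pnorm_le => e e0.
    have [N HN] := H e e0.
    exists N.+1 => // k /= Nk.
    rewrite ger0_norm ?powR_ge0// aE -(@root_pow e k) ?(ltW e0) //; last by apply: leq_trans Nk.
    apply: ge0_ler_powR => //; rewrite ?invr_ge0 ?ler0n ?nnegrE ?X_ge0 ?exprn_ge0 ?(ltW e0)//.
    by apply: HN; apply: ltnW.
  by move/cvg_limn_einf_sup => [].
Qed.

Definition BD p := forall e : R, 0 < e -> exists C, forall k, X p k <= C * e ^+ k.

Lemma fin_bound (f : nat -> R) (e : R) N : 0 < e ->
  exists C, 1 <= C /\ forall k, (k < N)%N -> f k <= C * e ^+ k.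
Proof.
move=> e0; elim: N => [|N [C [C1 HC]]]; first by exists 1; split.
have eN : 0 < e ^+ N by rewrite exprn_gt0.
exists (C + `|f N| / e ^+ N); split.
  by rewrite (le_trans C1)// lerDl divr_ge0// ltW.
move=> k; rewrite ltnS leq_eqVlt => /orP[/eqP ->|kN].
  rewrite mulrDl divfK ?gt_eqF//.
  rewrite (le_trans (ler_norm _))// lerDr mulr_ge0 ?exprn_ge0 ?(ltW e0)//.
  by rewrite (le_trans _ C1).
rewrite (le_trans (HC k kN))// ler_wpM2r ?exprn_ge0 ?(ltW e0)// lerDl.
by rewrite divr_ge0// ltW.
Qed.

Lemma EV_BD p : EV p <-> BD p.
Proof.
split.
- move=> H e e0; have [N HN] := H e e0.
  have [C [C1 HC]] := @fin_bound (X p) e N e0.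
  exists C => k; case: (ltnP k N) => kN; first exact: HC.
  by rewrite (le_trans (HN k kN))// ler_peMl ?exprn_ge0 ?(ltW e0).
- move=> H e e0.
  have e20 : 0 < e / 2 by rewrite divr_gt0.
  have [C HC] := H _ e20.
  have C0 : 0 <= C.
    have := HC 0%N; rewrite expr0 mulr1; apply: le_trans; exact: X_ge0.
  exists (Num.Def.archi_bound C) => k Nk.
  apply: (le_trans (HC k)).
  rewrite expr_div_n mulrA ler_pdivrMr ?exprn_gt0// mulrC.
  rewrite ler_wpM2l ?exprn_ge0 ?(ltW e0)//.
  apply: (le_trans (ltW (archi_boundP C0))).
  have : (Num.Def.archi_bound C <= 2 ^ k)%N.
    by apply: (leq_trans Nk); apply: ltnW; apply: ltn_expl.
  by rewrite -(ler_nat R) natrX.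
Qed.

Lemma neglB p : negl_dfact p <-> BD p.
Proof. by rewrite neglP EV_BD. Qed.

Lemma BD_abs p : BD p -> BD (ps_abs p).
Proof. move=> H e e0; have [C HC] := H e e0; exists C => k; rewrite /X /ps_abs normr_id; exact: HC. Qed.

Lemma BD_C0 {p e C} : 0 < e -> (forall k, X p k <= C * e ^+ k) -> 0 <= C.
Proof. by move=> e0 HC; have := HC 0%N; rewrite expr0 mulr1; apply: le_trans; exact: X_ge0. Qed.

Lemma BD_add p q : BD p -> BD q -> BD (ps_add p q).
Proof.
move=> Hp Hq e e0; have [C1 H1] := Hp e e0; have [C2 H2] := Hq e e0.
exists (C1 + C2) => k; rewrite mulrDl.
apply: le_trans (lerD (H1 k) (H2 k)).
rewrite /X /ps_add -mulrDl ler_wpM2r ?ler0n//; exact: ler_normD.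
Qed.

Lemma BD_scale c p : BD p -> BD (ps_scale c p).
Proof.
move=> Hp e e0; have [C H] := Hp e e0.
exists (`|c| * C) => k; rewrite /X /ps_scale normrM -mulrA -mulrA ler_wpM2l//.
exact: H.
Qed.

Lemma BD_dilate c p : BD p -> BD (ps_dilate c p).
Proof.
move=> Hp e e0.
have c1 : 0 < `|c| + 1 by rewrite ltr_wpDl.
have d0 : 0 < e / (`|c| + 1) by rewrite divr_gt0.
have [C H] := Hp _ d0.
have C0 := BD_C0 d0 H.
exists C => k; rewrite /X /ps_dilate normrM normrX mulrAC.
apply: (le_trans (ler_wpM2r _ (H k))); first by rewrite exprn_ge0.
rewrite -mulrA ler_wpM2l// -exprMn lerXn2r ?nnegrE ?mulr_ge0 ?divr_ge0 ?(ltW e0) ?(ltW c1)//.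
by rewrite mulrAC ler_pdivrMr // ler_wpM2l ?(ltW e0)// lerDl.
Qed.

Lemma BD_one : BD (@ps_one R).
Proof.
move=> e e0; exists 1 => k; rewrite /X /ps_one mul1r.
case: k => [|k] /=; first by rewrite normr1 mul1r expr0.
by rewrite normr0 mul0r exprn_ge0// ltW.
Qed.

Lemma BD_deriv p : BD p -> BD (ps_deriv p).
Proof.
move=> Hp e e0.
have d0 : 0 < e / 2 by rewrite divr_gt0.
have [C H] := Hp _ d0.
have C0 := BD_C0 d0 H.
exists (C * (e / 2)) => k.
have h1 : X (ps_deriv p) k <= k.+1%:R * X p k.+1.
  rewrite /X /ps_deriv normrM ger0_norm ?ler0n// -mulrA ler_wpM2l ?ler0n//.
  rewrite ler_wpM2l// ler_nat /dfact_pred /=; exact: dfact_pred_mono.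
apply: (le_trans h1); apply: (le_trans (ler_wpM2l (ler0n _ _) (H k.+1))).
rewrite exprS expr_div_n.
have h2 : (k.+1 <= 2 ^ k)%N by apply: ltn_expl.
have h2' : k.+1%:R <= (2 : R) ^+ k by rewrite -natrX ler_nat.
have t0 : 0 < (2 : R) ^+ k by rewrite exprn_gt0.
have -> : k.+1%:R * (C * (e / 2 * (e ^+ k / 2 ^+ k))) = C * (e / 2) * e ^+ k * (k.+1%:R / 2 ^+ k) by ring.
rewrite ler_piMr ?mulr_ge0 ?divr_ge0 ?exprn_ge0 ?(ltW e0)//.
by rewrite ler_pdivrMr// mul1r.
Qed.

Lemma BD_derivn n p : BD p -> BD (ps_derivn n p).
Proof. move=> H; elim: n => [|n IH] //=; exact: BD_deriv. Qed.

Lemma BD_integ p : BD p -> BD (ps_integ p).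
Proof.
move=> Hp e e0; have [C H] := Hp e e0.
exists (C / e) => k; case: k => [|k].
  by rewrite /X /= normr0 mul0r expr0 mulr1 divr_ge0 ?(ltW e0)// (BD_C0 e0 H).
have h1 : X (ps_integ p) k.+1 <= X p k.
  rewrite /X /= /dfact_pred /= normrM -mulrA ler_wpM2l// normfV ger0_norm ?ler0n//.
  rewrite mulrC ler_pdivrMr ?ltr0n// -natrM ler_nat mulnC; exact: dfactS'.
apply: (le_trans h1); apply: (le_trans (H k)).
have -> : C / e * e ^+ k.+1 = C * e ^+ k * (e / e) by rewrite exprS; ring.
by rewrite divff ?gt_eqF// mulr1.
Qed.

Lemma BD_mul p q : BD p -> BD q -> BD (ps_mul p q).
Proof.
move=> Hp Hq e e0.
have d0 : 0 < e / 8 by rewrite divr_gt0.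
have [C1 H1] := Hp _ d0; have [C2 H2] := Hq _ d0.
have C10 := BD_C0 d0 H1; have C20 := BD_C0 d0 H2.
exists (C1 * C2) => k.
have s1 : X (ps_mul p q) k <=
    \sum_(i < k.+1) 4%:R ^+ k * (X p i * X q (k - i)%N).
  rewrite /X /ps_mul.
  apply: (le_trans (ler_wpM2r (ler0n _ _) (ler_norm_sum _ _ _))).
  rewrite mulr_suml; apply: ler_sum => i _.
  have hi : (i + (k - i) = k)%N by rewrite subnKC// -ltnS.
  have hf := fD i (k - i); rewrite hi in hf.
  rewrite normrM.
  have -> : 4%:R ^+ k * (`|p i| * (dfact_pred i)%:R * (`|q (k - i)%N| * (dfact_pred (k - i))%:R))
     = `|p i| * `|q (k - i)%N| * (4 ^ k * dfact_pred i * dfact_pred (k - i))%:R.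
    by rewrite !natrM natrX; ring.
  by rewrite ler_wpM2l ?mulr_ge0// ler_nat.
apply: (le_trans s1).
have s2 : forall i : 'I_k.+1, 4%:R ^+ k * (X p i * X q (k - i)%N) <= 4%:R ^+ k * (C1 * C2 * (e / 8) ^+ k).
  move=> i; rewrite ler_wpM2l ?exprn_ge0 ?ler0n//.
  have hi : (i + (k - i) = k)%N by rewrite subnKC// -ltnS.
  rewrite (_ : (e / 8) ^+ k = (e / 8) ^+ i * (e / 8) ^+ (k - i)); last by rewrite -exprD hi.
  have -> : C1 * C2 * ((e / 8) ^+ i * (e / 8) ^+ (k - i)) = (C1 * (e / 8) ^+ i) * (C2 * (e / 8) ^+ (k - i)) by ring.
  by apply: ler_pM => //; [exact: X_ge0 | exact: X_ge0].
apply: (le_trans (ler_sum _ (fun i _ => s2 i))).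
rewrite sumr_const card_ord.
have h2 : (k.+1 <= 2 ^ k)%N by apply: ltn_expl.
have h2' : k.+1%:R <= (2 : R) ^+ k by rewrite -natrX ler_nat.
have -> : (4%:R ^+ k * (C1 * C2 * (e / 8) ^+ k)) *+ k.+1 = C1 * C2 * e ^+ k * (k.+1%:R / 2 ^+ k).
  rewrite -mulr_natr expr_div_n (_ : 8 = 4 * 2) ?exprMn; last by rewrite -natrM.
  field; rewrite ?mulf_neq0 ?expf_neq0 ?pnatr_eq0 //.
rewrite ler_piMr ?mulr_ge0 ?exprn_ge0 ?(ltW e0)//.
by rewrite ler_pdivrMr ?exprn_gt0// mul1r.
Qed.

Lemma BD_AD p q : BD p -> AD p q -> BD q.
Proof.
move=> Hp; elim => [n|||c f _ Hf|f g _ Hf _ Hg].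
- exact: BD_derivn.
- exact: BD_one.
- move=> f g _ Hf _ Hg; exact: BD_add.
- exact: BD_scale.
- exact: BD_mul.
Qed.
End A.

Theorem lemma6p3 (R : realType) :
  (* (i) *)
  (forall p : nat -> R, negl_dfact p -> negl_dfact (ps_integ p)) /\
  (* (ii) closure properties *)
  (forall p q : nat -> R, negl_dfact p -> negl_dfact q -> negl_dfact (ps_add p q)) /\
  (forall p : nat -> R, negl_dfact p -> negl_dfact (ps_deriv p)) /\
  (forall (c : R) (p : nat -> R), negl_dfact p -> negl_dfact (ps_scale c p)) /\
  (forall p q : nat -> R, negl_dfact p -> negl_dfact q -> negl_dfact (ps_mul p q)) /\
  (* (ii) consequence for A_D(p) *)
  (forall p q : nat -> R, negl_dfact p -> AD p q -> negl_dfact q) /\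
  (* (iii) *)
  (forall (c : R) (p : nat -> R), negl_dfact p -> negl_dfact (ps_dilate c p)) /\
  (* (iv) *)
  (forall p : nat -> R, negl_dfact p -> negl_dfact (ps_abs p)).
Proof.
split; first by move=> p /neglB H; apply/neglB; exact: BD_integ.
split; first by move=> p q /neglB Hp /neglB Hq; apply/neglB; exact: BD_add.
split; first by move=> p /neglB H; apply/neglB; exact: BD_deriv.
split; first by move=> c p /neglB H; apply/neglB; exact: BD_scale.
split; first by move=> p q /neglB Hp /neglB Hq; apply/neglB; exact: BD_mul.
split; first by move=> p q /neglB Hp HA; apply/neglB; exact: BD_AD Hp HA.
split; first by move=> c p /neglB H; apply/neglB; exact: BD_dilate.
by move=> p /neglB H; apply/neglB; exact: BD_abs.
Qed.
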